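(* Let $L>0$, $\tau>0$ and let $Z_1,\dots,Z_m$ be random variables with $\max_{1\le j\le m}\|Z_j\|_{\Psi_2(\cdot;L)}\le\tau$. Then $$\Big\|\Big(\max_{1\le j\le m}|Z_j|-\frac{\tau}{L}\,h_2^{-1}\Big(\frac{L^2}{2}\log(1+m)\Big)\Big)_+\Big\|_{\Psi_2(\cdot;\sqrt3 L)}\le\sqrt3\,\tau .$$
   Context: For $x\ge 0$ let $h_2(x)=(1+x)\log(1+x)-x$, an increasing bijection of $[0,\infty)$ onto itself, with inverse $h_2^{-1}$. For $L>0$ let $\Psi_2(x;L)=\exp\big(\frac{2}{L^2}h_2(Lx)\big)-1$. The Orlicz norm is $\|X\|_{\Psi}=\inf\{c>0: E\Psi(|X|/c)\le 1\}$; $(a)_+=\max(a,0)$. *)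

(* Defs.v *)
From HB Require Import structures.
From mathcomp Require Import all_boot all_order all_algebra.
From mathcomp Require Import all_classical all_reals all_analysis.
Set Implicit Arguments. Unset Strict Implicit. Unset Printing Implicit Defensive.
Import Order.TTheory GRing.Theory Num.Theory.
Import numFieldNormedType.Exports.
Local Open Scope classical_set_scope.
Local Open Scope ring_scope.

Definition h2 {R : realType} (x : R) : R := (1 + x) * ln (1 + x) - x.

Definition h2inv {R : realType} (y : R) : R :=
  get [set x : R | 0 <= x /\ h2 x = y].

Definition Psi2 {R : realType} (L : R) (x : R) : R :=
  expR (2 / L ^+ 2 * h2 (L * x)) - 1.

(* Orlicz norm ||X||_Psi = inf {c > 0 | E Psi(|X|/c) <= 1}, in \bar R
   (+oo if the set is empty). *)
Definition orlicz_norm {d} {T : measurableType d} {R : realType}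
  (P : probability T R) (Psi : R -> R) (X : T -> R) : \bar R :=
  ereal_inf [set c%:E | c in [set c : R | 0 < c /\
     (\int[P]_x (Psi (`|X x| / c))%:E <= 1)%E]].

Definition pos_part {R : realType} (a : R) : R := Num.max a 0.

(* Main.v *)
Require Import Defs.
From HB Require Import structures.
From mathcomp Require Import all_boot all_order all_algebra.
From mathcomp Require Import all_classical all_reals all_analysis.
From mathcomp Require Import ring lra measurable_realfun.
Import Order.TTheory GRing.Theory Num.Theory.
Import numFieldNormedType.Exports.
Local Open Scope classical_set_scope.
Local Open Scope ring_scope.
Section reals.
Context {R : realType}.
Implicit Types x y p q : R.

Lemma ln_le_sub1 x : 0 < x -> ln x <= x - 1.
Proof. move=> x0; have := expR_ge1Dx (ln x); rewrite lnK ?posrE //; lra. Qed.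

Lemma h2_0 : h2 (0:R) = 0.
Proof. by rewrite /h2 addr0 ln1 mulr0 subr0. Qed.

Lemma h2_ge0 x : 0 <= x -> 0 <= h2 x.
Proof.
move=> x0; rewrite /h2.
have A0 : 0 < 1 + x by lra.
have := @ln_le_sub1 (1+x)^-1; rewrite invr_gt0 => /(_ A0).
rewrite lnV ?posrE // => h.
have : 1 - (1+x)^-1 <= ln (1+x) by lra.
move=> /(ler_wpM2l (ltW A0)).
rewrite mulrBr mulr1 mulfV ?gt_eqF //; lra.
Qed.

Lemma h2_super p q : 0 <= p -> 0 <= q -> h2 p + h2 q <= h2 (p + q).
Proof.
move=> p0 q0; rewrite /h2.
set A := 1 + p; set B := 1 + q.
have -> : 1 + (p + q) = A + B - 1 by rewrite /A /B; ring.
set S := A + B - 1.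
have A0 : 0 < A by rewrite /A; lra.
have B0 : 0 < B by rewrite /B; lra.
have S0 : 0 < S by rewrite /S /A /B; lra.
have e1 : ln A - ln S <= A / S - 1.
  by rewrite -ln_div ?posrE //; apply: ln_le_sub1; rewrite divr_gt0.
have e2 : ln B - ln S <= B / S - 1.
  by rewrite -ln_div ?posrE //; apply: ln_le_sub1; rewrite divr_gt0.
have e3 : ln A + ln B - ln S <= A * B / S - 1.
  rewrite -lnM ?posrE // -ln_div ?posrE ?mulr_gt0 //.
  by apply: ln_le_sub1; rewrite divr_gt0 ?mulr_gt0.
have Am : 0 <= A - 1 by rewrite /A; lra.
have Bm : 0 <= B - 1 by rewrite /B; lra.
have e1' := ler_wpM2l Am e1.
have e2' := ler_wpM2l Bm e2.
have key : (A-1)*(A/S-1) + (B-1)*(B/S-1) + (A*B/S-1) = -((A-1)*(B-1)/S).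
  rewrite /S; field; rewrite /S; lra.
have kp : 0 <= (A-1)*(B-1)/S by rewrite divr_ge0 ?mulr_ge0 // ltW.
have eS : S * ln S = (A-1) * ln S + (B-1) * ln S + ln S.
  by rewrite /S; ring.
have -> : p = A - 1 by rewrite /A; ring.
have -> : q = B - 1 by rewrite /B; ring.
rewrite eS.
nra.
Qed.

Lemma h2_mono p q : 0 <= p -> p <= q -> h2 p <= h2 q.
Proof.
move=> p0 pq; have qp : 0 <= q - p by lra.
have := h2_super p (q-p) p0 qp; have -> : p + (q - p) = q by ring.
move=> h.

have := h2_ge0 (q-p) qp; lra.
Qed.

Lemma h2_cont x : 0 < 1 + x -> {for x, continuous (@h2 R)}.
Proof.
move=> x0.
have c1 : {for x, continuous (fun y : R => 1 + y)}.
  by apply: continuousD; [exact: cvg_cst | exact: cvg_id].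
apply: continuousB; last exact: cvg_id.
apply: continuousM => //.
exact: (continuous_comp c1 (continuous_ln x0)).
Qed.

End reals.
Section reals2.
Context {R : realType}.

Lemma h2inv_spec (y : R) : 0 <= y -> 0 <= h2inv y /\ h2 (h2inv y) = y.
Proof.
move=> y0; rewrite /h2inv; apply: (@getPex _ [set x : R | 0 <= x /\ h2 x = y]).
set X := expR (y + 2) - 1.
have X0 : 0 <= X by rewrite /X; have := expR_ge1Dx (y+2); lra.
have hX : y <= h2 X.
  have e : 1 + X = expR (y + 2) by rewrite /X; ring.
  rewrite /h2 e expRK /X.
  have := expR_ge1Dx (y+2); nra.
have [c c0X hc] : exists2 c, c \in `[0, X] & h2 c = y.
  apply: IVT => //.
    apply: continuous_in_subspaceT => z; rewrite inE /= in_itv /= => /andP[z0 _].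
    by apply: h2_cont; lra.
  rewrite h2_0; apply/andP; split.
    by rewrite ge_min y0.
  by rewrite le_max hX orbT.
exists c; split => //; move: c0X; rewrite in_itv /= => /andP[] //.
Qed.

Lemma Psi2_cont (L s : R) : 0 < 1 + L * s -> {for s, continuous (Psi2 L)}.
Proof.
move=> s0; rewrite /Psi2.
apply: continuousB; last exact: cvg_cst.
apply: (@continuous_comp _ _ _ (fun s => 2 / L ^+ 2 * h2 (L * s)) expR); last first.
  exact: continuous_expR.
apply: continuousM; first exact: cvg_cst.
have cL : {for s, continuous (fun s : R => L * s)}.
  by apply: continuousM; [exact: cvg_cst | exact: cvg_id].

have := continuous_comp cL (@h2_cont R (L*s) s0); exact.
Qed.

Lemma pos_partE (z : R) : pos_part z = (z + `|z|) / 2.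
Proof.
rewrite /pos_part /Num.max; case: (ltP z 0) => hz.
  by rewrite ltr0_norm //; field.
by rewrite ger0_norm //; field.
Qed.

Lemma pos_part_ge0 (z : R) : 0 <= pos_part z.
Proof. by rewrite /pos_part /Num.max; case: (ltP z 0). Qed.

Lemma cont_abs_psi (L k : R) : 0 < L -> 0 <= k ->
  continuous (fun y : R => Psi2 L (`|y| * k)).
Proof.
move=> L0 k0 y.
have c1 : {for y, continuous (fun y : R => `|y| * k)}.
  by apply: continuousM; [exact: norm_continuous | exact: cvg_cst].
apply: (continuous_comp c1); apply: Psi2_cont.
have : 0 <= L * (`|y| * k) by rewrite mulr_ge0 ?mulr_ge0 // ltW.
lra.
Qed.

Lemma cont_pos_psi (L a c : R) : 0 < L -> 0 < c ->
  continuous (fun y : R => Psi2 L (pos_part (y - a) / c)).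
Proof.
move=> L0 c0 y.
have c1 : {for y, continuous (fun y : R => pos_part (y - a) / c)}.
  have -> : (fun y : R => pos_part (y - a) / c) =
            (fun y => ((y - a) + `|y - a|) * (2 * c)^-1).
    by apply: funext => z; rewrite pos_partE; field; lra.
  have cB : {for y, continuous (fun y : R => y - a)}.
    by apply: continuousB; [exact: cvg_id | exact: cvg_cst].
  apply: continuousM; last exact: cvg_cst.
  apply: continuousD => //.
  exact: (continuous_comp cB (@norm_continuous _ R^o _)).
apply: (continuous_comp c1); apply: Psi2_cont.
have : 0 <= L * (pos_part (y - a) / c).
  by rewrite mulr_ge0 ?divr_ge0 ?pos_part_ge0 // ltW.
lra.
Qed.

End reals2.
Section meas.
Context {d : measure_display} {T : measurableType d} {R : realType} (P : probability T R).

Lemma Psi2_mono (L s t : R) : 0 < L -> 0 <= s -> s <= t -> Psi2 L s <= Psi2 L t.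
Proof.
rewrite /Psi2 => L0 s0 st; rewrite lerD2r ler_expR.
apply: ler_wpM2l; first by rewrite divr_ge0 // exprn_ge0 // ltW.
apply: h2_mono; first by rewrite mulr_ge0 // ltW.
by rewrite ler_wpM2l // ltW.
Qed.

Lemma Psi2_0 (L : R) : Psi2 L 0 = 0.
Proof. by rewrite /Psi2 mulr0 h2_0 mulr0 expR0 subrr. Qed.

Lemma Psi2_ge0 (L s : R) : 0 < L -> 0 <= s -> 0 <= Psi2 L s.
Proof. by move=> L0 s0; rewrite -(Psi2_0 L); apply: Psi2_mono. Qed.

Lemma mpsi (f : T -> R) (L k : R) : measurable_fun setT f -> 0 < L -> 0 <= k ->
  measurable_fun setT (fun x => (Psi2 L (`|f x| * k))%:E).
Proof.
move=> mf L0 k0; apply/measurable_EFinP.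
exact: (measurableT_comp (continuous_measurable_fun (@cont_abs_psi R L k L0 k0)) mf).
Qed.

End meas.
Section meas2.
Context {d : measure_display} {T : measurableType d} {R : realType} (P : probability T R).

Lemma harm_bounds (n : nat) : 0 < harmonic n :> R /\ harmonic n <= 1 :> R.
Proof.
split; first exact: harmonic_gt0.
by rewrite /harmonic invf_le1 ?ltr0n // ler1n.
Qed.

Lemma harm_noninc (m n : nat) : (m <= n)%N -> harmonic n <= harmonic m :> R.
Proof.
move=> mn; rewrite /harmonic.
have hm : 0 < m.+1%:R :> R by rewrite ltr0n.
have hn : 0 < n.+1%:R :> R by rewrite ltr0n.
have hmn : m.+1%:R <= n.+1%:R :> R by rewrite ler_nat.
rewrite -subr_ge0.
have -> : m.+1%:R^-1 - n.+1%:R^-1 = (n.+1%:R - m.+1%:R) / (m.+1%:R * n.+1%:R) :> R.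
  by field; rewrite ?gt_eqF.
by rewrite divr_ge0 ?subr_ge0 // mulr_ge0 // ltW.
Qed.

Lemma orlicz_at (f : T -> R) (L tau : R) : measurable_fun setT f -> 0 < L -> 0 < tau ->
  (orlicz_norm P (Psi2 L) f <= tau%:E)%E ->
  (\int[P]_x (Psi2 L (`|f x| / tau))%:E <= 1)%E.
Proof.
move=> mf L0 t0 hn.
pose w n : R := 1 - harmonic n / 2.
have w_gt0 n : 0 < w n by have := harm_bounds n; rewrite /w; lra.
have w_lt1 n : w n < 1 by have := harm_bounds n; rewrite /w; lra.
have w_nd m n : (m <= n)%N -> w m <= w n.
  by move=> /harm_noninc h; rewrite /w; lra.
have k0 n : 0 <= w n / tau by rewrite divr_ge0 // ltW.
pose g n x := (Psi2 L (`|f x| * (w n / tau)))%:E.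
have mg n : measurable_fun setT (g n) := mpsi _ _ _ mf L0 (k0 n).
have g0 n x : (0 <= g n x)%E.
  by rewrite lee_fin; apply: Psi2_ge0 => //; rewrite mulr_ge0.
have nd x : nondecreasing_seq (g^~x).
  move=> m n mn; rewrite lee_fin; apply: Psi2_mono => //; first by rewrite mulr_ge0.
  apply: ler_wpM2l => //; apply: ler_wpM2r; first by rewrite invr_ge0 ltW.
  exact: w_nd.
have hw : w @ \oo --> (1:R).
  have e : (1:R) = 1 - 0 / 2 by rewrite mul0r subr0.
  rewrite [X in _ --> X]e /w.
  apply: cvgB; first exact: cvg_cst.
  apply: cvgMr_tmp; exact: cvg_harmonic.
have lim x : limn (g^~x) = (Psi2 L (`|f x| / tau))%:E.
  apply: cvg_lim => //.
  apply: cvg_EFin; first by apply: nearW.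
  have hin : (fun n => `|f x| * (w n / tau)) @ \oo --> `|f x| / tau.
    have e : `|f x| / tau = `|f x| * (1 * tau^-1) by rewrite mul1r.
    rewrite [X in _ --> X]e.
    apply: cvgM; first exact: cvg_cst.
    exact: cvgMr_tmp.
  apply: (cvg_comp _ _ hin); apply: Psi2_cont.
  have : 0 <= L * (`|f x| / tau) by rewrite mulr_ge0 ?divr_ge0 // ltW.
  lra.
have MC := @monotone_convergence _ _ _ P setT measurableT g mg (fun n x _ => g0 n x) (fun x _ => nd x).
rewrite (eq_integral (fun x => limn (g^~x))); last by move=> x _; rewrite lim.
rewrite MC; apply: lime_le.
  apply: ereal_nondecreasing_is_cvgn => m n mn; apply: ge0_le_integral.
  - exact: measurableT.
  - by move=> x _; apply: g0.
  - exact: mg.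
  - exact: mg.
  - by move=> x _; apply: nd.
apply: nearW => n.
have : (orlicz_norm P (Psi2 L) f < (tau / w n)%:E)%E.
  apply: le_lt_trans hn _; rewrite lte_fin ltr_pdivlMr //.
  by rewrite gtr_pMr.
move/ereal_inf_lt => [_ [c [c0 hc] <-] hlt].
rewrite lte_fin ltr_pdivlMr // in hlt.
have c0' : 0 <= c^-1 by rewrite invr_ge0 ltW.
apply: (le_trans _ hc); apply: ge0_le_integral.
- exact: measurableT.
- by move=> x _; apply: g0.
- exact: mg.
- exact: (mpsi _ _ _ mf L0 c0').
move=> x _; rewrite lee_fin; apply: Psi2_mono => //; first by rewrite mulr_ge0.
apply: ler_wpM2l => //; rewrite -subr_ge0.
have -> : c^-1 - w n / tau = (tau - c * w n) / (c * tau).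
  by field; rewrite !gt_eqF.
apply: divr_ge0; last by rewrite mulr_ge0 // ltW.
by rewrite subr_ge0 ltW.
Qed.

End meas2.
Section reals3.
Context {R : realType}.

Lemma bigmax_bound (m : nat) (F : R -> R) (x : 'I_m -> R) :
  (forall s t, 0 <= s -> s <= t -> F s <= F t) ->
  (forall s, 0 <= s -> 0 <= F s) -> (forall j, 0 <= x j) ->
  F (\big[Num.max/0]_(j < m) x j) <= F 0 + \sum_(j < m) F (x j).
Proof.
move=> Fm F0 x0.
suff : [/\ 0 <= \big[Num.max/0]_(j < m) x j, 0 <= \sum_(j < m) F (x j) &
   F (\big[Num.max/0]_(j < m) x j) <= F 0 + \sum_(j < m) F (x j)] by case.
apply: (big_rec2 (fun a b => [/\ 0 <= a, 0 <= b & F a <= F 0 + b])).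
  by split => //; rewrite addr0.
move=> i a b _ [a0 b0 h].
have Fx := F0 _ (x0 i).
split.
- by rewrite /Num.max; case: ifP.
- by rewrite addr_ge0.
- rewrite /Num.max; case: ifP => _.
    have := F0 _ (x0 i); lra.
  have := F0 _ a0; have := F0 0 (lexx 0); lra.
Qed.

Lemma bigmax_ge0 (m : nat) (x : 'I_m -> R) : (forall j, 0 <= x j) ->
  0 <= \big[Num.max/0]_(j < m) x j.
Proof.
move=> x0; apply: (big_rec (fun a => 0 <= a)) => // i a _ a0.
by rewrite /Num.max; case: ifP.
Qed.

Lemma pointwise (m : nat) (L tau : R) (z : 'I_m -> R) : 0 < L -> 0 < tau ->
  (forall j, 0 <= z j) ->
  Psi2 (Num.sqrt 3 * L)
    (`|pos_part (\big[Num.max/0]_(j < m) z j - tau / L * h2inv (L ^+ 2 / 2 * ln (1 + m%:R)))|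
       / (Num.sqrt 3 * tau))
  <= (3 * (1 + m%:R))^-1 * \sum_(j < m) Psi2 L (z j / tau)
     + (3 * (1 + m%:R))^-1 * m%:R.
Proof.
move=> L0 t0 z0.
have L0w : 0 <= L := ltW L0.
have t0w : 0 <= tau := ltW t0.
set u := \big[Num.max/0]_(j < m) z j.
set y := L ^+ 2 / 2 * ln (1 + m%:R).
have m0 : 0 <= m%:R :> R by rewrite ler0n.
have y0 : 0 <= y.
  rewrite /y; apply: mulr_ge0; first by rewrite divr_ge0 ?exprn_ge0 ?ltW.
  by apply: ln_ge0; lra.
have [b0 hb] := h2inv_spec y y0.
set b := h2inv y in b0 hb *.
have u0 : 0 <= u by apply: bigmax_ge0.
set phi := fun s => 2 / L ^+ 2 * h2 (L * s).
have phi_mono s t : 0 <= s -> s <= t -> phi s <= phi t.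
  move=> s0 st; rewrite /phi; apply: ler_wpM2l; first by rewrite divr_ge0 ?exprn_ge0 ?ltW.
  apply: h2_mono; first by apply: mulr_ge0 => //; apply: ltW.
  by apply: ler_wpM2l => //; apply: ltW.
have phi_ge0 s : 0 <= s -> 0 <= phi s.
  move=> s0; rewrite /phi; apply: mulr_ge0.
    by apply: divr_ge0 => //; apply: exprn_ge0; apply: ltW.
  by apply: h2_ge0; apply: mulr_ge0 => //; apply: ltW.
set V := pos_part (u - tau / L * b).
have V0 : 0 <= V by apply: pos_part_ge0.
rewrite (ger0_norm V0).
set t := phi (V / tau).
have tt0 : 0 <= t by apply: phi_ge0; rewrite divr_ge0.
have s3 : Num.sqrt 3 ^+ 2 = 3 :> R by rewrite sqr_sqrtr.
have s3n : Num.sqrt 3 != 0 :> R by rewrite sqrtr_eq0 -ltNge.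
have lhsE : Psi2 (Num.sqrt 3 * L) (V / (Num.sqrt 3 * tau)) = expR (t / 3) - 1.
  rewrite /Psi2 /t /phi; congr (expR _ - 1).
  have -> : Num.sqrt 3 * L * (V / (Num.sqrt 3 * tau)) = L * (V / tau).
    by field; rewrite s3n !gt_eqF.
  rewrite exprMn s3; field; rewrite !gt_eqF //.
rewrite lhsE.
set S := \sum_(j < m) expR (phi (z j / tau)).
have S0 : 0 <= S by apply: sumr_ge0 => j _; apply: expR_ge0.
have m1 : 0 < 1 + m%:R :> R by lra.
have claim : (expR t - 1) * (1 + m%:R) <= S.
  case: (lerP u (tau / L * b)) => hu.
    have V00 : V = 0.
      by rewrite /V pos_partE ler0_norm ?subr_le0 // addrN mul0r.
    have -> : t = 0 by rewrite /t /phi V00 mul0r mulr0 h2_0 mulr0.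
    by rewrite expR0 subrr mul0r.
  have VE : V = u - tau / L * b.
    by rewrite /V pos_partE gtr0_norm ?subr_gt0 //; field; rewrite gt_eqF.
  have e1 : L * (V / tau) = L * (u / tau) - b.
    by rewrite VE; field; rewrite !gt_eqF.
  have q0 : 0 <= L * (u / tau) - b.
    by rewrite -e1 mulr_ge0 ?divr_ge0.
  have sup := h2_super _ _ b0 q0.
  rewrite (_ : b + (L * (u / tau) - b) = L * (u / tau)) in sup; last by ring.
  have hphi : ln (1 + m%:R) + t <= phi (u / tau).
    rewrite /t /phi e1.
    have -> : ln (1 + m%:R) = 2 / L ^+ 2 * y.
      by rewrite /y; field; rewrite gt_eqF.
    rewrite -hb -mulrDr; apply: ler_wpM2l; first by rewrite divr_ge0 ?exprn_ge0 ?ltW.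
    by [].
  have hexp : expR t * (1 + m%:R) <= expR (phi (u / tau)).
    rewrite -[X in _ * X](@lnK _ (1 + m%:R)) ?posrE // -expRD ler_expR.
    by rewrite addrC.
  have hbig := @bigmax_bound m (fun s => expR (phi (s / tau))) z.
  have : expR (phi (u / tau)) <= expR (phi (0 / tau)) + S.
    apply: hbig.
    - move=> s r s0 sr; rewrite ler_expR; apply: phi_mono.
        by rewrite divr_ge0.
      by rewrite ler_wpM2r ?invr_ge0.
    - by move=> s _; apply: expR_ge0.
    - exact: z0.
  rewrite mul0r /phi mulr0 h2_0 mulr0 expR0 => hb2.
  have : 0 <= expR t by apply: expR_ge0.
  nra.
have e3 : expR t = expR (t / 3) * expR (t / 3) * expR (t / 3).
  by rewrite -!expRD; congr expR; field.
have s1 : 1 <= expR (t / 3).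
  have := expR_ge1Dx (t / 3); have : 0 <= t / 3 by rewrite divr_ge0.
  lra.
have rhsE : (3 * (1 + m%:R))^-1 * \sum_(j < m) Psi2 L (z j / tau)
     + (3 * (1 + m%:R))^-1 * m%:R = S / (3 * (1 + m%:R)).
  rewrite /S /Psi2 sumrB sumr_const card_ord -/(phi _).
  have -> : (1 : R) *+ m = m%:R by [].
  by field; rewrite gt_eqF.
rewrite rhsE ler_pdivlMr ?mulr_gt0 //.
set s := expR (t / 3) in e3 s1.
have h3 : 0 <= (s - 1) * (s - 1) * (s + 2).
  by rewrite mulr_ge0 ?mulr_ge0 //; lra.
rewrite e3 in claim.
have h4 := mulr_ge0 h3 (ltW m1).
rewrite -/s.
nra.
Qed.

End reals3.
Lemma meas_bigmax {d : measure_display} {T : measurableType d} {R : realType}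
  (I : Type) (s : seq I) (f : I -> T -> R) :
  (forall i, measurable_fun setT (f i)) ->
  measurable_fun setT (fun x => \big[Num.max/0]_(j <- s) f j x).
Proof.
move=> mf; elim: s => [|i s ih].
  under eq_fun do rewrite big_nil.
  exact: measurable_cst.
under eq_fun do rewrite big_cons.
exact: (measurable_maxr (mf i) ih).
Qed.

Theorem lemma10 (d : measure_display) (T : measurableType d) (R : realType)
  (P : probability T R) (m : nat) (Z : 'I_m -> {RV P >-> R}) (L tau : R) :
  0 < L -> 0 < tau ->
  (forall j : 'I_m, (orlicz_norm P (Psi2 L) (Z j) <= tau%:E)%E) ->
  (orlicz_norm P (Psi2 (Num.sqrt 3 * L))
     (fun x => pos_part ((\big[Num.max/0]_(j < m) `|Z j x|)%R
                         - tau / L * h2inv (L ^+ 2 / 2 * ln (1 + m%:R)))%R)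
   <= (Num.sqrt 3 * tau)%:E)%E.
Proof.
move=> L0 t0 hZ.
set a := tau / L * h2inv (L ^+ 2 / 2 * ln (1 + m%:R)).
have s3p : 0 < Num.sqrt 3 :> R by rewrite sqrtr_gt0.
have L3 : 0 < Num.sqrt 3 * L by rewrite mulr_gt0.
have c0 : 0 < Num.sqrt 3 * tau by rewrite mulr_gt0.
pose k : R := (3 * (1 + m%:R))^-1.
have k0 : 0 <= k by rewrite /k invr_ge0 mulr_ge0 // addr_ge0 // ler0n.
have hF j : (\int[P]_x (Psi2 L (`|Z j x| / tau))%:E <= 1)%E.
  exact: (orlicz_at P _ _ _ (measurable_funPT (Z j)) L0 t0 (hZ j)).
have mF j : measurable_fun setT (fun x => (Psi2 L (`|Z j x| * tau^-1))%:E).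
  by apply: (mpsi _ _ _ (measurable_funPT (Z j)) L0); rewrite invr_ge0 ltW.
have F0 j x : (0 <= (Psi2 L (`|Z j x| / tau))%:E)%E.
  by rewrite lee_fin; apply: Psi2_ge0 => //; rewrite divr_ge0 // ltW.
apply: ereal_inf_lbound; exists (Num.sqrt 3 * tau) => //; split => //.
pose u x := \big[Num.max/0]_(j < m) `|Z j x|.
have mu : measurable_fun setT u.
  rewrite /u; apply: (@meas_bigmax _ _ _ _ (index_enum 'I_m) (fun j x => `|Z j x|)) => j.
  exact: (measurableT_comp (@normr_measurable R setT) (measurable_funPT (Z j))).
rewrite (eq_integral (fun x => (Psi2 (Num.sqrt 3 * L) (pos_part (u x - a) / (Num.sqrt 3 * tau)))%:E)); last first.
  by move=> x _; rewrite ger0_norm // pos_part_ge0.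
pose up x := (k%:E * \sum_(j < m) (Psi2 L (`|Z j x| / tau))%:E + (k * m%:R)%:E)%E.
have mup : measurable_fun setT up.
  apply: emeasurable_funD; last exact: measurable_cst.
  apply: measurable_funeM; apply: emeasurable_sum => j; exact: mF.
set lhs := (\int[P]_x _)%E.
suff [H1 H2] : (lhs <= \int[P]_x up x)%E /\ (\int[P]_x up x <= 1)%E.
  exact: (le_trans H1 H2).
split.
  apply: ge0_le_integral.
  - exact: measurableT.
  - move=> x _; rewrite lee_fin; apply: Psi2_ge0 => //.
    by rewrite divr_ge0 ?pos_part_ge0 // ltW.
  - apply/measurable_EFinP.
    exact: (measurableT_comp (continuous_measurable_fun (@cont_pos_psi R _ a _ L3 c0)) mu).
  - exact: mup.
  move=> x _; rewrite /up sumEFin -EFinM -EFinD lee_fin.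
  have := @pointwise R m L tau (fun j => `|Z j x|) L0 t0 (fun j => normr_ge0 _).
  by rewrite ger0_norm ?pos_part_ge0.
rewrite /up ge0_integralD; last 5 first.
- exact: measurableT.
- move=> x _; apply: mule_ge0; first by rewrite lee_fin.
  by apply: sume_ge0 => j _; apply: F0.
- apply: measurable_funeM; apply: emeasurable_sum => j; exact: mF.
- by move=> x _; rewrite lee_fin mulr_ge0 // ler0n.
- exact: measurable_cst.
rewrite ge0_integralZl; last 4 first.
- exact: measurableT.
- apply: emeasurable_sum => j; exact: mF.
- by move=> x _; apply: sume_ge0 => j _; apply: F0.
- by rewrite lee_fin.
rewrite ge0_integral_sum; last 3 first.
- exact: measurableT.
- exact: mF.
- by move=> j x _; apply: F0.
have -> : (\int[P]_x (k * m%:R)%:E = (k * m%:R)%:E)%E.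
  rewrite integral_cst //.
  rewrite -[RHS]mule1; congr (_ * _)%E; exact: probability_setT.
have Hs : (\sum_(j < m) \int[P]_x (Psi2 L (`|Z j x| / tau))%:E <= (m%:R)%:E)%E.
  have Ha : (\sum_(j < m) \int[P]_x (Psi2 L (`|Z j x| / tau))%:E <= \sum_(j < m) 1%:E)%E.
    by apply: lee_sum => j _; apply: hF.
  have Hb : (\sum_(j < m) (1:R)%:E = (m%:R)%:E)%E.
    by rewrite sumEFin sumr_const card_ord.
  by rewrite -Hb.
have H1 : (k%:E * (\sum_(j < m) \int[P]_x (Psi2 L (`|Z j x| / tau))%:E) + (k * m%:R)%:E
     <= k%:E * (m%:R)%:E + (k * m%:R)%:E)%E.
  apply: leeD2r; apply: lee_pmul.
  - by rewrite lee_fin.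
  - by apply: sume_ge0 => j _; apply: integral_ge0 => x _; apply: F0.
  - exact: lexx.
  - exact: Hs.
have H2 : (k%:E * (m%:R)%:E + (k * m%:R)%:E <= 1)%E.
  rewrite -EFinM -EFinD lee_fin /k.
  have m0 : 0 <= m%:R :> R by rewrite ler0n.
  have m1 : 0 < 3 * (1 + m%:R) :> R by apply: mulr_gt0 => //; lra.
  rewrite -mulrDr; apply: (@le_trans _ _ ((3 * (1 + m%:R))^-1 * (3 * (1 + m%:R)))).
    by apply: ler_wpM2l; [rewrite invr_ge0 ltW | lra].
  by rewrite mulVf // gt_eqF.
exact: (le_trans H1 H2).
Qed.
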